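(* Every expanding automaton semigroup is residually finite.
   Context: An expanding automaton is a quadruple $\mathcal{A}=(Q,\Sigma,t,o)$ with $Q$ a finite set of states, $\Sigma$ a finite alphabet, $t:Q\times\Sigma\to Q$ and $o:Q\times\Sigma\to\Sigma^+$. Each state $q$ induces $q:\Sigma^*\to\Sigma^*$ by $q(\emptyset)=\emptyset$ and $q(\sigma w)=o(q,\sigma)\,q'(w)$ with $q'=t(q,\sigma)$. An expanding automaton semigroup is (a semigroup isomorphic to) the semigroup of maps $\Sigma^*\to\Sigma^*$ generated under composition by the states of an expanding automaton. *)

(* Defs.v *)
From mathcomp Require Import all_boot.
From Stdlib Require Import FunctionalExtensionality.
Set Implicit Arguments. Unset Strict Implicit. Unset Printing Implicit Defensive.

Definition expanding (Q Sigma : finType) (o : Q -> Sigma -> seq Sigma) : Prop :=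
  forall q a, o q a <> [::].

Fixpoint state_map (Q Sigma : Type) (t : Q -> Sigma -> Q) (o : Q -> Sigma -> seq Sigma)
  (q : Q) (w : seq Sigma) : seq Sigma :=
  match w with
  | [::] => [::]
  | a :: w' => o q a ++ state_map t o (t q a) w'
  end.

Definition word_map (Q Sigma : Type) (t : Q -> Sigma -> Q) (o : Q -> Sigma -> seq Sigma)
  (ws : seq Q) : seq Sigma -> seq Sigma :=
  foldr (fun q g => state_map t o q \o g) id ws.

Definition in_aut_semigroup (Q Sigma : Type) (t : Q -> Sigma -> Q)
  (o : Q -> Sigma -> seq Sigma) (f : seq Sigma -> seq Sigma) : Prop :=
  exists ws : seq Q, ws <> [::] /\ f = word_map t o ws.

Definition aut_semigroup (Q Sigma : Type) (t : Q -> Sigma -> Q)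
  (o : Q -> Sigma -> seq Sigma) : Type :=
  { f : seq Sigma -> seq Sigma | in_aut_semigroup t o f }.

Lemma word_map_cat (Q Sigma : Type) (t : Q -> Sigma -> Q) (o : Q -> Sigma -> seq Sigma)
  (ws1 ws2 : seq Q) : word_map t o (ws1 ++ ws2) = word_map t o ws1 \o word_map t o ws2.
Proof.
apply: functional_extensionality => w.
by elim: ws1 w => [|q ws IH] w //=; rewrite /word_map /= -/(word_map t o _) IH.
Qed.

Lemma in_aut_semigroup_comp (Q Sigma : Type) (t : Q -> Sigma -> Q)
  (o : Q -> Sigma -> seq Sigma) f g :
  in_aut_semigroup t o f -> in_aut_semigroup t o g -> in_aut_semigroup t o (f \o g).
Proof.
move=> [ws1 [n1 ->]] [ws2 [n2 ->]]; exists (ws1 ++ ws2); split.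
  by case: ws1 n1.
by rewrite word_map_cat.
Qed.

Definition aut_mul (Q Sigma : Type) (t : Q -> Sigma -> Q) (o : Q -> Sigma -> seq Sigma)
  (x y : aut_semigroup t o) : aut_semigroup t o :=
  exist _ (proj1_sig x \o proj1_sig y)
    (in_aut_semigroup_comp (proj2_sig x) (proj2_sig y)).

Definition residually_finite (S : Type) (mul : S -> S -> S) : Prop :=
  forall x y : S, x <> y ->
    exists (F : finType) (op : F -> F -> F) (phi : S -> F),
      associative op /\
      (forall a b, phi (mul a b) = op (phi a) (phi b)) /\
      phi x <> phi y.

(* Main.v *)
Require Import Defs.
From mathcomp Require Import all_boot.
From Stdlib Require Import Classical ProofIrrelevance FunctionalExtensionality.
Set Implicit Arguments. Unset Strict Implicit. Unset Printing Implicit Defensive.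

Section S.
Variables (Q Sigma : finType) (t : Q -> Sigma -> Q) (o : Q -> Sigma -> seq Sigma).

Lemma state_cat q x y : state_map t o q (x ++ y) =
  state_map t o q x ++ state_map t o (foldl t q x) y.
Proof. by elim: x q => [|a x IH] q //=; rewrite IH catA. Qed.

Lemma wm_prefix ws x y : exists r, word_map t o ws (x ++ y) = word_map t o ws x ++ r.
Proof.
elim: ws => [|q ws [r IH]] /=; first by exists y.
rewrite /word_map /= -/(word_map t o ws) IH state_cat.
by eexists.
Qed.

Hypothesis hexp : expanding o.

Lemma state_size q x : size x <= size (state_map t o q x).
Proof.
elim: x q => [|a x IH] q //=; rewrite size_cat.
have : 0 < size (o q a) by move: (@hexp q a); case: (o q a).
move=> H; rewrite -add1n; apply: leq_add => //; exact: IH.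
Qed.

Lemma wm_size ws x : size x <= size (word_map t o ws x).
Proof.
elim: ws => [|q ws IH] //=.
rewrite /word_map /= -/(word_map t o ws).
exact: leq_trans IH (state_size _ _).
Qed.

Lemma wm_take n ws v : take n (word_map t o ws v) = take n (word_map t o ws (take n v)).
Proof.
have [r E] := wm_prefix ws (take n v) (drop n v).
rewrite cat_take_drop in E.
case: (leqP n (size v)) => Hn; last by rewrite (@take_oversize _ n v) ?(ltnW Hn).
rewrite E.
have Hs : n <= size (word_map t o ws (take n v)).
  by apply: leq_trans (wm_size _ _); rewrite size_takel.
by rewrite takel_cat.
Qed.
End S.

Fixpoint words (Sigma : finType) (n : nat) : seq (seq Sigma) :=
  if n is n'.+1 then [::] :: [seq a :: w | a <- enum Sigma, w <- words Sigma n']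
  else [:: [::]].

Lemma mem_words (Sigma : finType) n (s : seq Sigma) : size s <= n -> s \in words Sigma n.
Proof.
elim: n s => [|n IH] [|a s] //= Hs.
rewrite inE; apply/orP; right.
apply/allpairsP; exists (a, s) => /=; split => //; first by rewrite mem_enum.
exact: IH.
Qed.

Lemma size_take_le (T : Type) n (s : seq T) : size (take n s) <= n.
Proof. by rewrite size_take; case: ifP => // /negbT; rewrite -leqNgt. Qed.

Theorem mainTheorem8 (Q Sigma : finType) (t : Q -> Sigma -> Q)
  (o : Q -> Sigma -> seq Sigma) :
  expanding o -> residually_finite (@aut_mul Q Sigma t o).
Proof.
move=> hexp [f Hf] [g Hg] Hne.
have [w Hw] : exists w, f w <> g w.
  apply: NNPP => H; apply: Hne.
  have fg : f = g.
    apply: functional_extensionality => w; apply: NNPP => Hw; apply: H; by exists w.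
  subst g; congr exist; exact: proof_irrelevance.
pose n := maxn (size w) (maxn (size (f w)) (size (g w))).
pose L := words Sigma n.
pose M := size L.
pose enc (s : seq Sigma) : 'I_M.+1 := inord (index s L).
pose dec (i : 'I_M.+1) := nth [::] L i.
have decenc : forall s, size s <= n -> dec (enc s) = s.
  move=> s Hs; rewrite /dec /enc inordK ?nth_index ?mem_words //.
  by apply: ltnW; rewrite ltnS index_mem mem_words.
exists {ffun 'I_M.+1 -> 'I_M.+1}, (fun F G : {ffun 'I_M.+1 -> 'I_M.+1} => [ffun i => F (G i)]),
  (fun x => [ffun i => enc (take n (proj1_sig x (dec i)))]).
split; [|split].
- by move=> A B C; apply/ffunP => i; rewrite !ffunE.
- move=> [a Ha] [b Hb]; apply/ffunP => i; rewrite !ffunE /=.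
  rewrite decenc ?size_take_le //.
  case: Ha => wa [_ ->].
  by rewrite (@wm_take Q Sigma t o hexp).
- move=> /ffunP/(_ (enc w)); rewrite /= !ffunE.
  have Hw1 : size w <= n by rewrite leq_maxl.
  have Hf1 : size (f w) <= n by rewrite /n (leq_trans (leq_maxl _ (size (g w)))) // leq_maxr.
  have Hg1 : size (g w) <= n by rewrite /n (leq_trans (leq_maxr (size (f w)) _)) // leq_maxr.
  rewrite decenc // !take_oversize // => /(congr1 dec).
  by rewrite !decenc.
Qed.
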